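(* Let $P=(p_1,\dots,p_S)$ be a fixed probability distribution on $\{1,\dots,S\}$, let $\hat P_n=(N_1/n,\dots,N_S/n)$ be the empirical distribution of $n$ i.i.d. samples from $P$, where $N_k$ is the number of samples equal to $k$. Then, as $n\to\infty$, $$\mathbb E\big[(Q(P)-Q(\hat P_n))^2\big]=\mathcal O\Big(\frac{\log^4 n}{n}\Big).$$
   Context: For a probability vector $P=(p_1,\dots,p_S)$, $Q(P)=\sum_{k=1}^S p_k\log^2(p_k)$, with the convention $0\log^2 0=0$. *)

(* Defs.v *)
From HB Require Import structures.
From mathcomp Require Import all_boot all_order all_algebra.
From mathcomp Require Import all_classical all_reals all_analysis.
Set Implicit Arguments. Unset Strict Implicit. Unset Printing Implicit Defensive.
Import Order.TTheory GRing.Theory Num.Theory.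
Local Open Scope ring_scope.

Definition Qfun (R : realType) (S : nat) (P : 'I_S -> R) : R :=
  \sum_(k < S) (if P k == 0 then 0 else P k * (ln (P k)) ^+ 2).

Definition prob_vec (R : realType) (S : nat) (P : 'I_S -> R) : Prop :=
  (forall k, 0 <= P k) /\ \sum_(k < S) P k = 1.

Definition empirical (R : realType) (S n : nat) (s : {ffun 'I_n -> 'I_S})
  : 'I_S -> R :=
  fun k => #|[set i | s i == k]|%:R / n%:R.

(* E[(Q(P) - Q(hat P_n))^2] for n i.i.d. samples from P: the expectation is
   the sum over all sample sequences weighted by their product probability. *)
Definition mse_Q (R : realType) (S : nat) (P : 'I_S -> R) (n : nat) : R :=
  \sum_(s : {ffun 'I_n -> 'I_S})
     (\prod_(i < n) P (s i)) * (Qfun P - Qfun (empirical R s)) ^+ 2.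

(* Main.v *)
Require Import Defs.
From HB Require Import structures.
From mathcomp Require Import all_boot all_order all_algebra.
From mathcomp Require Import all_classical all_reals all_analysis.
From mathcomp Require Import ring lra.
Set Implicit Arguments. Unset Strict Implicit.
Import Order.TTheory GRing.Theory Num.Theory.
Local Open Scope ring_scope.
Definition gf (R : realType) (x : R) : R := if x == 0 then 0 else x * ln x ^+ 2.

Lemma slns (R : realType) (s : R) : 0 < s -> s <= 1 -> 0 <= s * (- ln s) <= 1.
Proof.
move=> s0 s1.
have h0 : 0 <= - ln s by rewrite oppr_ge0 ln_le0.
apply/andP; split; first by rewrite mulr_ge0 // ltW.
rewrite -lnV ?posrE //.
have : 0 < s^-1 by rewrite invr_gt0.
move=> /ln_sublinear /ltW h.
by rewrite -(mulfV (lt0r_neq0 s0)) ler_wpM2l // ltW.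
Qed.

Lemma tln2 (R : realType) (t : R) : 0 < t -> t <= 1 -> t * ln t ^+ 2 <= 4.
Proof.
move=> t0 t1.
set s := Num.sqrt t.
have s0 : 0 < s by rewrite sqrtr_gt0.
have ss : s * s = t by rewrite -expr2 sqr_sqrtr // ltW.
have s1 : s <= 1.
  rewrite leNgt; apply/negP => h.
  have : 1 < s * s by nra.
  by rewrite ss ltNge t1.
have := slns s0 s1 => /andP [h1 h2].
have -> : ln t = ln s + ln s by rewrite -ss lnM ?posrE.
rewrite -ss.
have e : s * s * (ln s + ln s) ^+ 2 = 4 * (s * - ln s) ^+ 2 by ring.
rewrite e.
have : (s * - ln s) ^+ 2 <= 1 by rewrite expr2; nra.
lra.
Qed.
Lemma ln_le_sub1 (R : realType) (z : R) : 0 < z -> ln z <= z - 1.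
Proof.
move=> z0; have -> : z = 1 + (z - 1) by ring.
have -> : 1 + (z - 1) - 1 = z - 1 by ring.
apply: le_ln1Dx; lra.
Qed.

Lemma gsmall (R : realType) (n : nat) (x : R) : (0 < n)%N -> 0 <= x -> x <= n%:R^-1 ->
  0 <= gf x <= 2 * (4 + ln (n%:R : R) ^+ 2) / n%:R.
Proof.
move=> n0 x0 xn.
have n0' : 0 < (n%:R : R) by rewrite ltr0n.
rewrite /gf; case: ifP => [_|/negbT xne0].
  by rewrite lexx /= divr_ge0 // ?ler0n // mulr_ge0 // addr_ge0 // sqr_ge0.
have x0' : 0 < x by rewrite lt0r xne0.
set t := n%:R * x.
have t0 : 0 < t by rewrite mulr_gt0.
have t1 : t <= 1.
  by have := ler_wpM2l (ltW n0') xn; rewrite mulfV // lt0r_neq0.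
have ex : x = t / n%:R by rewrite /t mulrAC divff ?mul1r // lt0r_neq0.
have lx : ln x = ln t - ln (n%:R : R) by rewrite ex ln_div ?posrE.
have := tln2 t0 t1 => ht.
apply/andP; split; first by rewrite mulr_ge0 // ?sqr_ge0 // ltW.
rewrite lx ex.
set a := ln t; set b := ln (n%:R : R).
have h1 : t / n%:R * (a - b) ^+ 2 <= (t * a ^+ 2 + t * b ^+ 2) * 2 / n%:R.
  rewrite mulrAC ler_pM2r ?invr_gt0 //.
  have : 0 <= (a + b) ^+ 2 by rewrite sqr_ge0.
  nra.
apply: (le_trans h1).
rewrite ler_pM2r ?invr_gt0 //.
have : t * b ^+ 2 <= b ^+ 2 by rewrite ler_piMl // sqr_ge0.
have ht' : t * a ^+ 2 <= 4 by exact: ht.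
lra.
Qed.

Lemma glip (R : realType) (n : nat) (x y : R) : (0 < n)%N ->
  n%:R^-1 <= x -> x <= y -> y <= 1 ->
  `|gf y - gf x| <= (y - x) * (ln (n%:R : R) ^+ 2 + 2 * ln (n%:R : R)).
Proof.
move=> n0 xn xy y1.
have n0' : 0 < (n%:R : R) by rewrite ltr0n.
have x0 : 0 < x by apply: lt_le_trans xn; rewrite invr_gt0.
have y0 : 0 < y by apply: lt_le_trans xy.
rewrite /gf (negbTE (lt0r_neq0 x0)) (negbTE (lt0r_neq0 y0)).
set L := ln (n%:R : R); set a := ln x; set b := ln y.
have aL : - L <= a by rewrite /L -lnV ?posrE // /a ler_ln ?posrE ?invr_gt0.
have ab : a <= b by rewrite /a /b ler_ln ?posrE.
have b0 : b <= 0 by rewrite /b ln_le0.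
have e1 : x * (b - a) <= y - x.
  rewrite /a /b -ln_div ?posrE //.
  have := ln_le_sub1 (divr_gt0 y0 x0) => h.
  have -> : y - x = x * (y / x - 1) by rewrite mulrBr mulr1 mulrC mulfVK // lt0r_neq0.
  by rewrite ler_wpM2l // ltW.
have e0 : 0 <= x * (b - a) by rewrite mulr_ge0 ?subr_ge0 // ltW.
have eq : y * b ^+ 2 - x * a ^+ 2 = (y - x) * b ^+ 2 + x * (b - a) * (b + a) by ring.
rewrite eq.
set d := y - x; set e := x * (b - a).
have d0 : 0 <= d by rewrite subr_ge0.
have hb : b ^+ 2 <= L ^+ 2 by nra.
have h1 : d * b ^+ 2 <= d * L ^+ 2 by rewrite ler_wpM2l.
have h2 : 0 <= d * b ^+ 2 by rewrite mulr_ge0 // sqr_ge0.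
have h3 : `|e * (b + a)| <= 2 * L * d.
  rewrite normrM ger0_norm // ler0_norm; last by lra.
  have : -(b + a) <= 2 * L by lra.
  have L0 : 0 <= L by lra.
  have ed : e <= d by exact: e1.
  have e0' : 0 <= e by exact: e0.
  move=> hh.
  have k1 : 0 <= e * (2 * L + (b + a)) by rewrite mulr_ge0 //; lra.
  have k2 : 0 <= (d - e) * (2 * L) by rewrite mulr_ge0 //; lra.
  nra.
apply: (le_trans (ler_normD _ _)).
rewrite ger0_norm //; lra.
Qed.
Lemma glipB (R : realType) (n : nat) (u v : R) : (0 < n)%N ->
  n%:R^-1 <= u -> u <= 1 -> n%:R^-1 <= v -> v <= 1 ->
  `|gf u - gf v| <= `|u - v| * (ln (n%:R : R) ^+ 2 + 2 * ln (n%:R : R)).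
Proof.
move=> n0 u0 u1 v0 v1; case: (lerP u v) => uv.
  by rewrite distrC glip.
by rewrite glip // ltW.
Qed.

Lemma gnorm_small (R : realType) (M u v : R) : 0 <= u <= M -> 0 <= v <= M -> `|u - v| <= M.
Proof. move=> /andP[h1 h2] /andP[h3 h4]; rewrite ler_norml; apply/andP; split; lra. Qed.

Lemma glip2 (R : realType) (n : nat) (x y : R) : (0 < n)%N -> 1 <= ln (n%:R : R) ->
  0 <= x -> x <= 1 -> 0 <= y -> y <= 1 ->
  `|gf x - gf y| <= 20 * ln (n%:R : R) ^+ 2 * (`|x - y| + n%:R^-1).
Proof.
move=> n0 L1 x0 x1 y0 y1.
set L := ln (n%:R : R); set c := n%:R^-1.
have n0' : 0 < (n%:R : R) by rewrite ltr0n.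
have c0 : 0 < c by rewrite invr_gt0.
have c1 : c <= 1 by rewrite invr_le1 // ?ler1n // unitfE lt0r_neq0.
set M := 2 * (4 + L ^+ 2) / n%:R.
have hM : M = 2 * (4 + L ^+ 2) * c by [].
have L1' : 1 <= L by exact: L1.
have LL : 1 <= L ^+ 2 by rewrite expr2; nra.
have ML : M <= 10 * L ^+ 2 * c by rewrite hM ler_pM2r //; lra.
set K := L ^+ 2 + 2 * L.
have KL : K <= 3 * L ^+ 2 by rewrite /K expr2; nra.
have gc : 0 <= gf c <= M by exact: (gsmall n0 (ltW c0) (lexx c)).
have nxy : 0 <= `|x - y| by [].
have L20 : 0 <= L ^+ 2 by rewrite sqr_ge0.
case: (lerP x c) => xc; case: (lerP y c) => yc.
- have := gnorm_small (gsmall n0 x0 xc) (gsmall n0 y0 yc) => h.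
  have : 0 <= L ^+2 * `|x - y| by rewrite mulr_ge0.
  rewrite -/L -/c -/M in h; nra.
- have h1 := gnorm_small (gsmall n0 x0 xc) gc.
  have h2 := glipB n0 (lexx c) c1 (ltW yc) y1.
  have h3 : `|c - y| <= `|x - y|.
    have p1 : 0 <= y - c by rewrite subr_ge0 ltW.
    have p2 : 0 <= y - x by rewrite subr_ge0; lra.
    rewrite distrC (ger0_norm p1) distrC (ger0_norm p2); lra.
  have := ler_distD (gf c) (gf x) (gf y).
  rewrite -/L -/c -/M -/K in h1 h2 *.
  move=> h4.
  have h5 : `|c - y| * K <= `|x - y| * (3 * L ^+ 2).
    apply: ler_pM => //; first by rewrite /K; nra.
  nra.
- have h1 := gnorm_small (gsmall n0 y0 yc) gc.
  have h2 := glipB n0 (ltW xc) x1 (lexx c) c1.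
  have h3 : `|x - c| <= `|x - y|.
    have p1 : 0 <= x - c by rewrite subr_ge0 ltW.
    have p2 : 0 <= x - y by rewrite subr_ge0; lra.
    rewrite (ger0_norm p1) (ger0_norm p2); lra.
  have := ler_distD (gf c) (gf x) (gf y).
  rewrite -/L -/c -/M -/K in h1 h2 *.
  rewrite (distrC (gf c) (gf y)).
  move=> h4.
  have h5 : `|x - c| * K <= `|x - y| * (3 * L ^+ 2).
    apply: ler_pM => //; first by rewrite /K; nra.
  nra.
- have h2 := glipB n0 (ltW xc) x1 (ltW yc) y1.
  rewrite -/L -/c -/K in h2.
  have h5 : `|x - y| * K <= `|x - y| * (3 * L ^+ 2) by rewrite ler_wpM2l.
  have : 0 <= L ^+ 2 * c by rewrite mulr_ge0 // ltW.
  nra.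
Qed.
Lemma gsq (R : realType) (n : nat) (x y : R) : (0 < n)%N -> 1 <= ln (n%:R : R) ->
  0 <= x -> x <= 1 -> 0 <= y -> y <= 1 ->
  (gf x - gf y) ^+ 2 <= 800 * ln (n%:R : R) ^+ 4 * ((x - y) ^+ 2 + n%:R^-1 ^+ 2).
Proof.
move=> n0 L1 x0 x1 y0 y1.
have := glip2 n0 L1 x0 x1 y0 y1.
set u := gf x - gf y; set L := ln (n%:R : R); set c := n%:R^-1; set v := `|x - y|.
have c0 : 0 <= c by rewrite invr_ge0 ler0n.
have v0 : 0 <= v by rewrite /v normr_ge0.
have vv : v ^+ 2 = (x - y) ^+ 2 by rewrite /v real_normK // num_real.
rewrite -vv.
have L20 : 0 <= L ^+ 2 by rewrite sqr_ge0.
have -> : L ^+ 4 = L ^+ 2 * L ^+ 2 by rewrite -exprD.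
set A := 20 * L ^+ 2.
move=> /ler_normlP [h1 h2].
have A0 : 0 <= A by rewrite mulr_ge0.
have B0 : 0 <= A * (v + c) by rewrite mulr_ge0 // addr_ge0.
have hu : u ^+ 2 <= (A * (v + c)) ^+ 2.
  have k : 0 <= (A * (v + c) - u) * (A * (v + c) + u) by rewrite mulr_ge0 //; lra.
  rewrite !expr2; nra.
have hv : (v + c) ^+ 2 <= 2 * (v ^+ 2 + c ^+ 2).
  have : 0 <= (v - c) ^+ 2 by rewrite sqr_ge0.
  rewrite !expr2; nra.
apply: (le_trans hu).
rewrite exprMn.
have -> : 800 * (L ^+ 2 * L ^+ 2) = A ^+ 2 * 2 by rewrite /A; ring.
rewrite -mulrA ler_wpM2l // ?sqr_ge0 //.
Qed.

Lemma Ew_prod (R : realType) (S n : nat) (P : 'I_S -> R) (F : 'I_n -> 'I_S -> R) :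
  \sum_(s : {ffun 'I_n -> 'I_S}) (\prod_(i < n) P (s i)) * \prod_(i < n) F i (s i)
  = \prod_(i < n) \sum_(t < S) P t * F i t.
Proof. by rewrite bigA_distr_bigA; apply: eq_bigr => s _; rewrite -big_split. Qed.

Lemma prod_if (R : realType) (n : nat) (i : 'I_n) (h : 'I_n -> R) :
  \prod_(l < n) (if l == i then h l else 1) = h i.
Proof. by rewrite -big_mkcond big_pred1_eq. Qed.

Lemma E1 (R : realType) (S n : nat) (P : 'I_S -> R) : prob_vec P ->
  \sum_(s : {ffun 'I_n -> 'I_S}) \prod_(i < n) P (s i) = 1.
Proof.
move=> [_ sP].
have := @Ew_prod R S n P (fun _ _ => 1).
under eq_bigr do rewrite big1_eq mulr1.
move=> ->; under eq_bigr do under eq_bigr do rewrite mulr1.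
by rewrite sP big1_eq.
Qed.
Definition Yk (R : realType) (S : nat) (P : 'I_S -> R) (k t : 'I_S) : R := (t == k)%:R - P k.

Lemma sumPY (R : realType) (S : nat) (P : 'I_S -> R) (k : 'I_S) : prob_vec P ->
  \sum_(t < S) P t * Yk P k t = 0.
Proof.
move=> [_ sP]; rewrite /Yk.
under eq_bigr do rewrite mulrBr.
rewrite sumrB -mulr_suml sP mul1r.
rewrite (bigD1 k) //= eqxx mulr1 big1 ?addr0 ?subrr // => t /negbTE ->.
by rewrite mulr0.
Qed.

Lemma Pk_le1 (R : realType) (S : nat) (P : 'I_S -> R) (k : 'I_S) : prob_vec P -> P k <= 1.
Proof.
move=> [P0 sP]; rewrite -sP (bigD1 k) //= lerDl sumr_ge0 //.
Qed.

Lemma Yk_sq (R : realType) (S : nat) (P : 'I_S -> R) (k t : 'I_S) : prob_vec P ->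
  Yk P k t * Yk P k t <= 1.
Proof.
move=> hP; have := Pk_le1 k hP; have := hP.1 k; rewrite /Yk.
by case: (t == k) => /= h1 h2; nra.
Qed.

Lemma EYY (R : realType) (S n : nat) (P : 'I_S -> R) (k : 'I_S) (i j : 'I_n) :
  prob_vec P ->
  \sum_(s : {ffun 'I_n -> 'I_S}) (\prod_(l < n) P (s l)) * (Yk P k (s i) * Yk P k (s j))
  <= (i == j)%:R.
Proof.
move=> hP.
have -> : \sum_(s : {ffun 'I_n -> 'I_S}) (\prod_(l < n) P (s l)) * (Yk P k (s i) * Yk P k (s j))
  = \prod_(l < n) \sum_(t < S) P t *
      ((if l == i then Yk P k t else 1) * (if l == j then Yk P k t else 1)).
  rewrite -Ew_prod; apply: eq_bigr => s _; rewrite big_split /=.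
  by rewrite (prod_if i (fun l => Yk P k (s l))) (prod_if j (fun l => Yk P k (s l))).
rewrite (bigD1 i) //= eqxx.
case: (eqVneq i j) => [<-|ij] /=.
  rewrite [X in _ * X]big1 ?mulr1.
    apply: le_trans (_ : \sum_(t < S) P t * 1 <= 1).
      by apply: ler_sum => t _; rewrite ler_wpM2l ?(hP.1 t) // Yk_sq.
    by rewrite (eq_bigr (fun t => P t)) ?hP.2 // => t _; rewrite mulr1.
  move=> l /negbTE ->; under eq_bigr do rewrite !mulr1.
  by rewrite hP.2.
under eq_bigr do rewrite !mulr1.
by rewrite sumPY // mul0r.
Qed.
Lemma emp_eq (R : realType) (S n : nat) (P : 'I_S -> R) (k : 'I_S) (s : {ffun 'I_n -> 'I_S}) :
  (0 < n)%N -> empirical R s k - P k = n%:R^-1 * \sum_(i < n) Yk P k (s i).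
Proof.
move=> n0.
have n0' : (n%:R : R) != 0 by rewrite pnatr_eq0 -lt0n.
have hN : (#|[set i | s i == k]|%:R : R) = \sum_(i < n) ((s i == k)%:R : R).
  rewrite -sum1dep_card natr_sum big_mkcond /=; apply: eq_bigr => i _.
  by case: (s i == k).
rewrite /empirical /Yk sumrB sumr_const card_ord -hN.
rewrite mulrBr -mulr_natr; field; exact: n0'.
Qed.

Lemma EDk (R : realType) (S n : nat) (P : 'I_S -> R) (k : 'I_S) :
  prob_vec P -> (0 < n)%N ->
  \sum_(s : {ffun 'I_n -> 'I_S}) (\prod_(l < n) P (s l)) * (empirical R s k - P k) ^+ 2
  <= n%:R^-1.
Proof.
move=> hP n0.
have n0' : (n%:R : R) != 0 by rewrite pnatr_eq0 -lt0n.
under eq_bigr do rewrite emp_eq //.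
have e : forall s : {ffun 'I_n -> 'I_S},
   (\prod_(l < n) P (s l)) * (n%:R^-1 * \sum_(i < n) Yk P k (s i)) ^+ 2
   = n%:R^-1 ^+ 2 * \sum_(i < n) \sum_(j < n)
        (\prod_(l < n) P (s l)) * (Yk P k (s i) * Yk P k (s j)).
  move=> s; rewrite exprMn (expr2 (\sum_(i < n) _)) big_distrlr /= mulrCA; congr (_ * _).
  rewrite mulr_sumr; apply: eq_bigr => i _; rewrite mulr_sumr //.
under eq_bigr do rewrite e.
rewrite -mulr_sumr.
rewrite (exchange_big).
under eq_bigr do rewrite exchange_big.
apply: le_trans (_ : n%:R^-1 ^+ 2 * \sum_(i < n) \sum_(j < n) ((i == j)%:R : R) <= _).
  rewrite ler_wpM2l ?exprn_ge0 ?invr_ge0 ?ler0n //.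
  apply: ler_sum => i _; apply: ler_sum => j _; exact: EYY.
have -> : \sum_(i < n) \sum_(j < n) ((i == j)%:R : R) = n%:R.
  rewrite -[n in RHS]card_ord -sumr_const; apply: eq_bigr => i _.
  rewrite (bigD1 i) //= eqxx big1 ?addr0 // => j; rewrite eq_sym => /negbTE ->.
  by [].
by rewrite expr2 -mulrA mulVf // mulr1.
Qed.
Lemma cs_sum (R : realType) (S : nat) (a : 'I_S -> R) :
  (\sum_(k < S) a k) ^+ 2 <= S%:R * \sum_(k < S) a k ^+ 2.
Proof.
set T := \sum_(k < S) a k ^+ 2.
have h0 : 0 <= \sum_(j < S) \sum_(k < S) (a j - a k) ^+ 2.
  by apply: sumr_ge0 => j _; apply: sumr_ge0 => k _; rewrite sqr_ge0.
have e1 : \sum_(j < S) \sum_(k < S) (a j - a k) ^+ 2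
  = \sum_(j < S) \sum_(k < S) a j ^+ 2 + \sum_(j < S) \sum_(k < S) a k ^+ 2
    - 2 * \sum_(j < S) \sum_(k < S) a j * a k.
  rewrite mulr_sumr -big_split -sumrB; apply: eq_bigr => j _.
  rewrite mulr_sumr -big_split -sumrB; apply: eq_bigr => k _ /=; ring.
have e2 : \sum_(j < S) \sum_(k < S) a j ^+ 2 = S%:R * T.
  rewrite /T mulr_sumr; apply: eq_bigr => j _.
  by rewrite sumr_const card_ord mulr_natl.
have e3 : \sum_(j < S) \sum_(k < S) a k ^+ 2 = S%:R * T.
  by rewrite sumr_const card_ord mulr_natl.
have e4 : \sum_(j < S) \sum_(k < S) a j * a k = (\sum_(k < S) a k) ^+ 2.
  by rewrite expr2 big_distrlr.
rewrite e1 e2 e3 e4 in h0.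
lra.
Qed.
Lemma emp_bounds (R : realType) (S n : nat) (s : {ffun 'I_n -> 'I_S}) (k : 'I_S) :
  (0 < n)%N -> 0 <= empirical R s k <= 1.
Proof.
move=> n0; have n0' : (0 : R) < n%:R by rewrite ltr0n.
rewrite /empirical divr_ge0 ?ler0n //= ler_pdivrMr // mul1r ler_nat.
by rewrite -[X in (_ <= X)%N]card_ord max_card.
Qed.


Theorem mainTheorem5 (R : realType) (S : nat) (P : 'I_S -> R) :
  prob_vec P ->
  exists (C : R) (N : nat), forall n : nat, (N <= n)%N ->
    mse_Q P n <= C * (ln (n%:R : R)) ^+ 4 / n%:R.
Proof.
move=> hP.
exists (1600 * S%:R ^+ 2), (Num.trunc (expR (1 : R))).+1 => n hn.
have n0 : (0 < n)%N by apply: leq_trans hn.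
have n0' : (0 : R) < n%:R by rewrite ltr0n.
have L1 : 1 <= ln (n%:R : R).
  have h1 := truncnS_gt (expR (1 : R)).
  have h2 : ((Num.trunc (expR (1 : R))).+1%:R : R) <= n%:R by rewrite ler_nat.
  rewrite -[X in X <= _](expRK 1) ler_ln ?posrE ?expR_gt0 //.
  exact: ltW (lt_le_trans h1 h2).
pose L := ln (n%:R : R).
pose c := (n%:R : R)^-1.
pose B := 800 * L ^+ 4.
have c0 : 0 < c by rewrite invr_gt0.
have L0 : 0 <= L by rewrite /L ln_ge0 // ler1n.
have B0 : 0 <= B by rewrite /B mulr_ge0 ?ler0n ?exprn_ge0.
pose w := fun s : {ffun 'I_n -> 'I_S} => \prod_(l < n) P (s l).
have w0 : forall s, 0 <= w s by move=> s; apply: prodr_ge0 => i _; exact: hP.1.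
have pt : forall s : {ffun 'I_n -> 'I_S},
    (Qfun P - Qfun (empirical R s)) ^+ 2 <=
    S%:R * \sum_(k < S) B * ((empirical R s k - P k) ^+ 2 + c ^+ 2).
  move=> s.
  have -> : Qfun P - Qfun (empirical R s) = \sum_(k < S) (gf (P k) - gf (empirical R s k)).
    by rewrite /Qfun -sumrB.
  apply: (le_trans (cs_sum _)).
  rewrite ler_wpM2l ?ler0n //; apply: ler_sum => k _.
  have := emp_bounds R s k n0 => /andP [e0 e1].
  have := gsq n0 L1 (hP.1 k) (Pk_le1 k hP) e0 e1.
  by rewrite -/L -/c -/B (_ : (P k - empirical R s k) ^+ 2 = (empirical R s k - P k) ^+ 2) //;
     rewrite -sqrrN opprB.
rewrite /mse_Q.
apply: le_trans (_ : \sum_(s : {ffun 'I_n -> 'I_S}) w s *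
     (S%:R * \sum_(k < S) B * ((empirical R s k - P k) ^+ 2 + c ^+ 2)) <= _).
  by apply: ler_sum => s _; apply: ler_wpM2l; [exact: w0 | exact: pt].
have -> : \sum_(s : {ffun 'I_n -> 'I_S}) w s *
     (S%:R * \sum_(k < S) B * ((empirical R s k - P k) ^+ 2 + c ^+ 2))
  = S%:R * B * \sum_(k < S) \sum_(s : {ffun 'I_n -> 'I_S})
        (w s * (empirical R s k - P k) ^+ 2 + c ^+ 2 * w s).
  rewrite exchange_big /= !mulr_sumr; apply: eq_bigr => s _.
  rewrite !mulr_sumr; apply: eq_bigr => k _; ring.
apply: le_trans (_ : S%:R * B * \sum_(k < S) (c + c ^+ 2) <= _).
  rewrite ler_wpM2l ?mulr_ge0 ?ler0n //; apply: ler_sum => k _.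
  rewrite big_split /= -mulr_sumr E1 // mulr1 lerD2r.
  exact: EDk.
rewrite sumr_const card_ord -(mulr_natl (c + c ^+ 2) S).
have cc : c ^+ 2 <= c.
  have : c <= 1 by rewrite invr_le1 // ?ler1n // unitfE lt0r_neq0.
  rewrite expr2; nra.
have S0 : (0 : R) <= S%:R by rewrite ler0n.
have -> : 1600 * S%:R ^+ 2 * ln (n%:R : R) ^+ 4 / n%:R = S%:R * B * (S%:R * (2 * c)).
  by rewrite /B /c /L; ring.
apply: ler_wpM2l; first exact: mulr_ge0 S0 B0.
apply: ler_wpM2l; first exact: S0.
by rewrite mulrDl mul1r lerD2l.
Qed.
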